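(* Let $n\ge 1$ and let $f_1,\dots,f_n:\mathbb{R}^n\to\mathbb{R}$ be $C^1$ functions such that for all $x\in\mathbb{R}^n$ $$-f_i(x)+\sum_{j=1}^n f_j(x)\frac{\partial f_i}{\partial x_j}(x)=0\quad(1\le i\le n),\qquad \sum_{i,j=1}^n f_{j,i}(x)f_{i,j}(x)=0,\qquad \sum_{i=1}^n f_{i,i}(x)=0 .$$ Then the functions $v_i(t,x):=-\frac{f_i(x)}{1-t}$, $1\le i\le n$, satisfy the incompressible Euler equations on $[0,1)\times\mathbb{R}^n$ with initial data $h_i=-f_i$.
   Context: The incompressible Euler equations on $\mathbb{R}^n$ are $\partial_t v_i+\sum_{j=1}^n v_j\partial_{x_j}v_i=-\partial_{x_i}p$ ($1\le i\le n$), $\sum_{i=1}^n\partial_{x_i}v_i=0$, $v_i(0,x)=h_i(x)$, for a velocity field $v$ and a pressure $p$. Notation: $f_{i,j}:=\partial f_i/\partial x_j$. *)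

(* Defs.v *)
From HB Require Import structures.
From mathcomp Require Import all_boot all_order all_algebra.
From mathcomp Require Import all_classical all_reals all_analysis.
Set Implicit Arguments. Unset Strict Implicit. Unset Printing Implicit Defensive.
Import Order.TTheory GRing.Theory Num.Theory.
Import numFieldNormedType.Exports.
Local Open Scope classical_set_scope.
Local Open Scope ring_scope.

Definition ebase {R : realType} {n : nat} (j : 'I_n) : 'rV[R]_n := delta_mx 0 j.

Definition pderiv {R : realType} {n : nat} (f : 'rV[R]_n -> R) (j : 'I_n)
  (x : 'rV[R]_n) : R := 'D_(ebase j) f x.

Definition C1 {R : realType} {n : nat} (f : 'rV[R]_n -> R) : Prop :=
  (forall x, differentiable f x) /\ (forall j : 'I_n, continuous (pderiv f j)).

Definition tderiv {R : realType} {n : nat} (g : R -> 'rV[R]_n -> R) (t : R)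
  (x : 'rV[R]_n) : R := 'D_1 (fun s : R => g s x) t.

Definition euler_solution {R : realType} {n : nat} (T : set R)
  (v : 'I_n -> R -> 'rV[R]_n -> R) (p : R -> 'rV[R]_n -> R)
  (h : 'I_n -> 'rV[R]_n -> R) : Prop :=
  [/\ (forall t x, T t -> forall i : 'I_n,
         [/\ derivable (fun s : R => v i s x) t 1,
             (forall j : 'I_n, derivable (v i t) x (ebase j)),
             derivable (p t) x (ebase i) &
             tderiv (v i) t x + \sum_(j < n) v j t x * pderiv (v i t) j x
               = - pderiv (p t) i x]),
      (forall t x, T t -> \sum_(i < n) pderiv (v i t) i x = 0) &
      (forall i x, v i 0 x = h i x)].

(* Main.v *)
Require Import Defs.
From HB Require Import structures.
From mathcomp Require Import all_boot all_order all_algebra.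
From mathcomp Require Import all_classical all_reals all_analysis.
From mathcomp Require Import ring.
Import Order.TTheory GRing.Theory Num.Theory.
Import numFieldNormedType.Exports.
Local Open Scope classical_set_scope.
Local Open Scope ring_scope.

Lemma tder (R : realType) (c t : R) : t < 1 ->
  is_derive t 1 (fun s : R => - c / (1 - s)) (- c / (1 - t) ^+ 2).
Proof.
move=> ht.
have h1 := is_deriveB (is_derive_cst (1:R) t 1) (is_derive_id t 1).
have hnz : (1 - t) != 0 by rewrite subr_eq0 gt_eqF.
have h1' : is_derive t (1:R) (fun s : R => 1 - s) (0 - 1) by exact: h1.
have h2 := @is_deriveV R (fun s : R => 1 - s) t _ 1 hnz h1'.
have h3 := is_deriveZ (- c) h2.
have -> : (fun s : R => - c / (1 - s)) = (- c) \*: (fun s => (1 - s)^-1) by [].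
suff -> : - c / (1 - t) ^+ 2 = (- c) *: (- (1 - t) ^- 2 *: (0 - 1)) by [].
by rewrite /GRing.scale /= sub0r mulrN1 opprK.
Qed.

Lemma spfun (R : realType) (n : nat) (g : 'rV[R]_n -> R) (t : R) :
  (fun x => - g x / (1 - t)) = (- (1 - t)^-1) \*: g.
Proof. by apply: funext => x; rewrite /= /GRing.scale /= mulrC mulNr mulrN. Qed.

Lemma spder (R : realType) (n : nat) (g : 'rV[R]_n -> R) (t : R) x j :
  C1 g ->
  derivable (fun x => - g x / (1 - t)) x (ebase j) /\
  pderiv (fun x => - g x / (1 - t)) j x = - (1 - t)^-1 * pderiv g j x.
Proof.
move=> [hd _]; rewrite spfun.
have hg : derivable g x (ebase j) by apply: diff_derivable; exact: hd.
split; first exact: derivableZ.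
by rewrite /pderiv deriveZ.
Qed.

Theorem proposition1p3 (R : realType) (n : nat) (hn : (1 <= n)%N)
  (f : 'I_n -> 'rV[R]_n -> R)
  (hC1 : forall i, C1 (f i))
  (h1 : forall x i, - f i x + \sum_(j < n) f j x * pderiv (f i) j x = 0)
  (h2 : forall x, \sum_(i < n) \sum_(j < n) pderiv (f j) i x * pderiv (f i) j x = 0)
  (h3 : forall x, \sum_(i < n) pderiv (f i) i x = 0) :
  exists p : R -> 'rV[R]_n -> R,
    euler_solution `[0, 1[ (fun i t x => - f i x / (1 - t)) p (fun i x => - f i x).
Proof.
exists (fun _ _ => 0); split.
- move=> t x Ht i.
  have ht : t < 1.
    by move: Ht; rewrite /= in_itv /= => /andP[_].
  split.
  + by case: (@tder R (f i x) t ht).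
  + by move=> j; case: (@spder R n (f i) t x j (hC1 i)).
  + exact: derivable_cst.
  + rewrite /tderiv (@derive_val _ _ _ _ _ _ _ (@tder R (f i x) t ht)).
    rewrite /pderiv derive_cst oppr0 .
    rewrite (eq_bigr (fun j => (1 - t)^-2 * (f j x * pderiv (f i) j x))); last first.
      move=> j _; rewrite -[X in _ * X]/(pderiv _ j x); case: (@spder R n (f i) t x j (hC1 i)) => _ ->.
      by field; rewrite subr_eq0 gt_eqF.
    have hs : \sum_(j < n) f j x * pderiv (f i) j x = f i x.
      by apply/eqP; rewrite -subr_eq0 addrC; apply/eqP; exact: h1.
    by rewrite -mulr_sumr hs [_ * f i x]mulrC mulNr addNr.
- move=> t x Ht.
  rewrite (eq_bigr (fun i => - (1 - t)^-1 * pderiv (f i) i x)); last first.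
    by move=> i _; case: (@spder R n (f i) t x i (hC1 i)) => _ ->.
  by rewrite -mulr_sumr h3 mulr0.
- by move=> i x; rewrite subr0 invr1 mulr1.
Qed.
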